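(* Let $K\subset K'$ be a field extension, $x=(x_1,\ldots,x_n)$, and let $M\subset K[x]^p$ be a finitely generated $K[x]$-submodule. Let $J_1,\ldots,J_p$ be subsets of $\{1,\ldots,n\}$, write $x_{J_i}=(x_k)_{k\in J_i}$, and set $A_i=K[x_{J_i}]$, $A'_i=K'[x_{J_i}]$ for $i\in\{1,\ldots,p\}$. Put $$\mathcal{N}=M\cap (A_1\times\cdots\times A_p),\qquad \mathcal{N}'=(K'[x]M)\cap(A'_1\times\cdots\times A'_p),$$ where $K'[x]M\subset K'[x]^p$ is the $K'[x]$-submodule generated by $M$. If $\hat u=\sum_{j=1}^r w_j\hat v_j\in\mathcal{N}'$ for some $w_1,\ldots,w_r\in M$ and $\hat v_1,\ldots,\hat v_r\in K'[x]$, then there exist $v_1,\ldots,v_r\in K[x]$ such that $u=\sum_{j=1}^r w_jv_j\in\mathcal{N}$ and $\min_{i\in\{1,\ldots,p\}}\operatorname{ord} u_i=\min_{i\in\{1,\ldots,p\}}\operatorname{ord}\hat u_i$.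
   Context: For a polynomial $g$ in $x$, $\operatorname{ord} g$ denotes its order, i.e. the least total degree of a monomial appearing in $g$ with nonzero coefficient ($\operatorname{ord}0=\infty$). For a vector $u=(u_1,\ldots,u_p)$, $u_i$ denotes its $i$-th component. *)

(* Defs.v *)
From mathcomp Require Import all_boot all_algebra.
From mathcomp Require Import mpoly.
Set Implicit Arguments. Unset Strict Implicit. Unset Printing Implicit Defensive.
Import GRing.Theory.
Local Open Scope ring_scope.

(* Order of a polynomial: least total degree of a monomial with nonzero
   coefficient; None encodes +infinity (ord 0 = oo). *)
Definition mord (R : ringType) (n : nat) (q : {mpoly R[n]}) : option nat :=
  match [seq mdeg m | m <- msupp q] with
  | [::] => None
  | d :: ds => Some (foldr minn d ds)
  end.

Definition omin (a b : option nat) : option nat :=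
  match a, b with
  | None, _ => b
  | _, None => a
  | Some x, Some y => Some (minn x y)
  end.

Definition vord (R : ringType) (n p : nat) (u : 'rV[{mpoly R[n]}]_p) : option nat :=
  foldr omin None [seq mord (u 0 i) | i <- enum 'I_p].

Definition in_subring (R : ringType) (n : nat) (J : {set 'I_n}) (q : {mpoly R[n]}) : Prop :=
  forall m, m \in msupp q -> forall k : 'I_n, k \notin J -> m k = 0%N.

Definition fin_gen_submod (R : comRingType) (V : lmodType R) (M : V -> Prop) : Prop :=
  exists (s : nat) (g : 'I_s -> V),
    forall u, M u <-> exists c : 'I_s -> R, u = \sum_(i < s) c i *: g i.

Definition gen_submod (R : comRingType) (V : lmodType R) (S : V -> Prop) (u : V) : Prop :=
  exists (k : nat) (c : 'I_k -> R) (g : 'I_k -> V),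
    (forall i, S (g i)) /\ u = \sum_(i < k) c i *: g i.

(* Main.v *)
Require Import Defs.
From mathcomp Require Import all_boot all_algebra.
From mathcomp Require Import mpoly.
From Stdlib Require Import Classical.
Import GRing.Theory.
Set Implicit Arguments. Unset Strict Implicit.
Local Open Scope ring_scope.

Lemma foldr_minn_mem (d : nat) ds : foldr minn d ds \in d :: ds.
Proof.
elim: ds => [|x ds IH] /=; first by rewrite inE.
rewrite /minn; case: ifP => _; first by rewrite !inE eqxx orbT.
move: IH; rewrite !inE => /orP [->|->] //; by rewrite !orbT.
Qed.

Lemma foldr_minn_le (d : nat) ds x : x \in d :: ds -> (foldr minn d ds <= x)%N.
Proof.
elim: ds x => [|y ds IH] x /=; first by rewrite inE => /eqP ->.
rewrite !inE => /or3P [/eqP->|/eqP->|H].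
- by rewrite geq_min IH ?inE ?eqxx ?orbT.
- by rewrite geq_min leqnn.
- by rewrite geq_min IH ?inE ?H ?orbT.
Qed.

Lemma mord_None (R : ringType) n (q : {mpoly R[n]}) : mord q = None -> msupp q = [::].
Proof. by rewrite /mord; case: (msupp q). Qed.

Lemma mord_Some (R : ringType) n (q : {mpoly R[n]}) d : mord q = Some d ->
  (exists2 m, m \in msupp q & mdeg m = d) /\ (forall m, m \in msupp q -> (d <= mdeg m)%N).
Proof.
rewrite /mord; case E: [seq mdeg m | m <- msupp q] => [|x xs] // [<-]; split.
- have := foldr_minn_mem x xs; rewrite -E => /mapP [m Hm ->]; by exists m.
- move=> m Hm; apply: foldr_minn_le; rewrite -E; exact: map_f.
Qed.

Lemma foldr_omin_None (l : seq (option nat)) : foldr omin None l = None -> forall x, x \in l -> x = None.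
Proof.
elim: l => [|y l IH] //= H x; rewrite inE => /orP [/eqP ->|Hx].
- by move: H; case: y => // ?; case: (foldr omin None l).
- apply: IH Hx; move: H; case: y => //; by case: (foldr omin None l).
Qed.

Lemma foldr_omin_Some (l : seq (option nat)) d : foldr omin None l = Some d ->
  Some d \in l /\ forall x e, x \in l -> x = Some e -> (d <= e)%N.
Proof.
elim: l d => [|y l IH] //= d.
case: y => [y|]; last first.
  move=> /IH [H1 H2]; split; first by rewrite inE H1 orbT.
  by move=> x e; rewrite inE => /orP [/eqP -> //|]; apply: H2.
case E: (foldr omin None l) => [z|] /= [<-].
- have [H1 H2] := IH _ E; split.
  + rewrite /minn; case: ifP => _; first by rewrite inE eqxx.
    by rewrite inE H1 orbT.
  + move=> x e; rewrite inE => /orP [/eqP -> [<-]|Hx Hxe]; first by rewrite geq_min leqnn.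
    by rewrite geq_min (H2 x e Hx Hxe) orbT.
- split; first by rewrite inE eqxx.
  move=> x e; rewrite inE => /orP [/eqP -> [<-] //|Hx Hxe].
  by rewrite (foldr_omin_None E Hx) in Hxe.
Qed.

Lemma vord_None (R : ringType) n p (u : 'rV[{mpoly R[n]}]_p) : vord u = None ->
  forall i, msupp (u 0 i) = [::].
Proof.
move=> /foldr_omin_None H i; apply: mord_None; apply: H.
by apply: map_f; rewrite mem_enum.
Qed.

Lemma vord_Some (R : ringType) n p (u : 'rV[{mpoly R[n]}]_p) d : vord u = Some d ->
  (exists i, exists2 m, m \in msupp (u 0 i) & mdeg m = d) /\
  (forall i m, m \in msupp (u 0 i) -> (d <= mdeg m)%N).
Proof.
move=> /foldr_omin_Some [H1 H2]; split.
- move: H1 => /mapP [i _ /esym /mord_Some [H _]]; by exists i.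
- move=> i m Hm.
  case E: (mord (u 0 i)) => [e|].
  + have [_ H] := mord_Some E. apply: leq_trans (H _ Hm).
    apply: (H2 (mord (u 0 i))) => //; apply: map_f; by rewrite mem_enum.
  + by rewrite (mord_None E) in Hm.
Qed.

Lemma vord_eq (R S : ringType) n p (u : 'rV[{mpoly R[n]}]_p) (u' : 'rV[{mpoly S[n]}]_p) d :
  vord u' = Some d ->
  (exists i, exists2 m, m \in msupp (u 0 i) & mdeg m = d) ->
  (forall i m, m \in msupp (u 0 i) -> (d <= mdeg m)%N) -> vord u = Some d.
Proof.
move=> _ [i [m Hm Hd]] Hle.
case E: (vord u) => [e|].
- have [[i' [m' Hm' <-]] H] := vord_Some E.
  by congr Some; apply/eqP; rewrite eqn_leq (Hle _ _ Hm') -Hd (H _ _ Hm).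
- by rewrite (vord_None E) in Hm.
Qed.
Lemma basis_exists (K K' : fieldType) (f : {rmorphism K -> K'}) (s : seq K') :
  exists m (e : 'I_m -> K') (a : K' -> 'I_m -> K),
  (forall c : 'I_m -> K, \sum_l f (c l) * e l = 0 -> forall l, c l = 0) /\
  (forall y, y \in s -> y = \sum_l f (a y l) * e l).
Proof.
elim: s => [|y s [m [e [a [Hind Hsp]]]]].
  exists 0%N, (fun _ => 0), (fun _ _ => 0); split; first by move=> c _ [].
  by [].
have [[c Hc]|Hn] := classic (exists c : 'I_m -> K, y = \sum_l f (c l) * e l).
  exists m, e, (fun z => if z == y then c else a z); split => // z.
  rewrite inE; case: eqP => [-> _ //|_ /= Hz]; exact: Hsp.
exists m.+1, (fun l => if unlift ord0 l is Some l' then e l' else y),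
  (fun z l => if z == y then (if unlift ord0 l is Some _ then 0 else 1)
              else (if unlift ord0 l is Some l' then a z l' else 0)).
split.
  move=> c; rewrite big_ord_recl unlift_none.
  under eq_bigr do rewrite liftK.
  move=> H.
  have c0 : c ord0 = 0.
    apply/eqP; apply/negPn/negP => Hc0; apply: Hn.
    exists (fun l => - c (lift ord0 l) / c ord0).
    have Hf : f (c ord0) != 0 by rewrite fmorph_eq0.
    apply: (mulfI Hf); rewrite mulr_sumr.
    have -> : f (c ord0) * y = - \sum_(l < m) f (c (lift ord0 l)) * e l.
      by apply/eqP; rewrite -addr_eq0 H.
    rewrite -sumrN; apply: eq_bigr => l _.
    rewrite fmorph_div rmorphN /= !mulNr mulrN mulrA mulrCA divff // mulr1.
    by [].
  move: H; rewrite c0 rmorph0 mul0r add0r => /Hind H l.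
  case: (unliftP ord0 l) => [l' ->|->] //; exact: H.
move=> z; rewrite inE; case: eqP => [-> _|_ /= Hz].
  rewrite big_ord_recl unlift_none rmorph1 mul1r big1 ?addr0 // => l _.
  by rewrite liftK rmorph0 mul0r.
rewrite big_ord_recl unlift_none rmorph0 mul0r add0r.
under eq_bigr do rewrite liftK.
exact: Hsp.
Qed.

Theorem proposition1p1 (K K' : fieldType) (f : {rmorphism K -> K'})
  (n p : nat) (M : 'rV[{mpoly K[n]}]_p -> Prop)
  (hM : fin_gen_submod M)
  (J : 'I_p -> {set 'I_n})
  (r : nat) (w : 'I_r -> 'rV[{mpoly K[n]}]_p) (vhat : 'I_r -> {mpoly K'[n]})
  (hw : forall j, M (w j)) :
  let ext := fun u : 'rV[{mpoly K[n]}]_p => map_mx (map_mpoly f) u in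
  let uhat := \sum_(j < r) vhat j *: ext (w j) in
  (gen_submod (fun u' => exists u, M u /\ u' = ext u) uhat /\
   forall i : 'I_p, in_subring (J i) (uhat 0 i)) ->
  exists v : 'I_r -> {mpoly K[n]},
    let u := \sum_(j < r) v j *: w j in
    (M u /\ forall i : 'I_p, in_subring (J i) (u 0 i)) /\
    vord u = vord uhat.
Proof.
move=> ext uhat [_ Hsub].
have HM : forall v : 'I_r -> {mpoly K[n]}, M (\sum_j v j *: w j).
  have [sg [g Hg]] := hM.
  have [c Hc] := fin_all_exists (fun j => (Hg (w j)).1 (hw j)).
  move=> v; apply/Hg; exists (fun i => \sum_j v j * c j i).
  under eq_bigr => j _ do rewrite (Hc j) scaler_sumr.
  rewrite exchange_big; apply: eq_bigr => i _; rewrite scaler_suml.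
  by apply: eq_bigr => j _; rewrite scalerA.
pose s := flatten [seq [seq (vhat j)@_mon | mon <- msupp (vhat j)] | j <- enum 'I_r].
have [m [e [a [Hind Hsp]]]] := basis_exists f s.
pose V l j : {mpoly K[n]} := \sum_(mon <- msupp (vhat j)) a ((vhat j)@_mon) l *: 'X_[mon].
have HV : forall l j mon, (V l j)@_mon = if mon \in msupp (vhat j) then a ((vhat j)@_mon) l else 0.
  move=> l j mon; rewrite /V raddf_sum /=.
  under eq_bigr do rewrite mcoeffZ mcoeffX.
  case: ifP => Hm.
    rewrite (bigD1_seq mon) ?msupp_uniq //= eqxx mulr1 big1 ?addr0 // => mon' /negPf H.
    by rewrite H mulr0.
  rewrite big1_seq // => mon' /= Hm'; case: eqP => [E|]; last by rewrite mulr0.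
  by rewrite -E Hm' in Hm.
have Hvhat : forall j, vhat j = \sum_l e l *: map_mpoly f (V l j).
  move=> j; apply/mpolyP => mon; rewrite raddf_sum /=.
  case: (boolP (mon \in msupp (vhat j))) => Hm.
    under eq_bigr do rewrite mcoeffZ mcoeff_map_mpoly HV Hm.
    rewrite {1}(Hsp ((vhat j)@_mon)); last first.
      apply/flattenP; exists [seq (vhat j)@_mon | mon <- msupp (vhat j)].
        by apply: (map_f (fun j => [seq (vhat j)@_mon | mon <- msupp (vhat j)])); rewrite mem_enum.
      exact: map_f.
    by apply: eq_bigr => l _; rewrite mulrC.
  under eq_bigr do rewrite mcoeffZ mcoeff_map_mpoly HV (negPf Hm).
  rewrite memN_msupp_eq0 // big1 // => l _; by rewrite raddf0 mulr0.
pose U l := \sum_j V l j *: w j.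
have Huhat : forall i, uhat 0 i = \sum_l e l *: map_mpoly f (U l 0 i).
  move=> i; rewrite /uhat /U summxE.
  under eq_bigr => j _ do rewrite mxE /ext mxE (Hvhat j) mulr_suml.
  rewrite exchange_big; apply: eq_bigr => l _.
  rewrite summxE rmorph_sum scaler_sumr; apply: eq_bigr => j _.
  by rewrite !mxE rmorphM scalerAl.
have Hcoef : forall i mon, (uhat 0 i)@_mon = 0 -> forall l, (U l 0 i)@_mon = 0.
  move=> i mon; rewrite Huhat raddf_sum /=.
  under eq_bigr do rewrite mcoeffZ mcoeff_map_mpoly mulrC.
  exact: Hind.
have Hsupp : forall l i mon, mon \in msupp (U l 0 i) -> mon \in msupp (uhat 0 i).
  move=> l i mon; rewrite !mcoeff_msupp => H; apply/negP => /eqP H0.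
  by move: H; rewrite Hcoef ?eqxx.
case E: (vord uhat) => [d|].
  have [[i [mon Hmon Hd]] Hle] := vord_Some E.
  case: (pickP (fun l => mon \in msupp (U l 0 i))) => [l0 Hl0 | Hno]; last first.
    move: Hmon; rewrite mcoeff_msupp Huhat raddf_sum /= big1 ?eqxx // => l _.
    by rewrite mcoeffZ mcoeff_map_mpoly memN_msupp_eq0 ?Hno // raddf0 mulr0.
  exists (V l0); cbv zeta; split; first split.
  - exact: HM.
  - move=> i' mon' Hm' k Hk; apply: (Hsub i' mon' _ k Hk); exact: Hsupp Hm'.
  - apply: (vord_eq E); first by exists i, mon.
    move=> i' m' Hm'; exact: Hle (Hsupp _ _ _ Hm').
have Hu0 : \sum_(j < r) (0:{mpoly K[n]}) *: w j = 0 by rewrite big1 // => j _; rewrite scale0r.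
have ms0 : msupp (0 : {mpoly K[n]}) = [::] by apply/eqP; rewrite msupp_eq0.
exists (fun _ => 0); cbv zeta; rewrite Hu0; split; first split.
- by rewrite -Hu0; exact: HM.
- by move=> i mon; rewrite mxE ms0.
- case E0: (vord _) => [d|] //; have [[i [mon Hm _]] _] := vord_Some E0.
  by rewrite mxE ms0 in Hm.
Qed.
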